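(* Let $G=(V,E)$ be a connected undirected graph and $\bm q$ a probability distribution on $V$. Then $G$ is an $\alpha$-insensitive equilibrium in the add-delete-model (with jump distribution $\bm q$) if and only if $G$ is a complete graph.
   Context: PageRank. For $\alpha\in(0,1)$ and distribution $\bm q$, for a directed graph $D$ let $\Gamma(u)$ be the out-neighbour set; the potential $\phi_{uv}$ is the probability that an $\alpha$-random walk (with probability $\alpha$ jump to a vertex drawn from $\bm q$, otherwise move to a uniformly random out-neighbour; a vertex with no out-neighbours forces a jump) started at $u$ visits $v$ before its first jump; for $\Gamma(v)\ne\emptyset$ the PageRank is $\pi_v=\alpha\,\frac{\sum_{u}q_u\phi_{uv}}{1-\frac{1-\alpha}{|\Gamma(v)|}\sum_{i\in\Gamma(v)}\phi_{iv}}$ (the stationary probability of $v$ when no out-degree is $0$). Undirected graphs are identified with bidirected graphs; $\pi^H_w$ is the PageRank of $w$ in $H$. Add-delete-model. A strategy of a vertex $v$ of $G$ is a subset $E_v\subseteq\Gamma(v)$ of neighbours to keep together with at most one non-neighbour $u\ne v$; the resulting graph $G'$ is obtained by deleting edges $vw$, $w\in\Gamma(v)\setminus E_v$, and adding $uv$ if $u$ is chosen ($v$ must keep at least one neighbour in $G'$). It is admissible if no edge is added, or the edge $uv$ is added and $\pi^{G'}_u>\pi^G_u$. $v$ is in best response if no admissible strategy gives $\pi^{G'}_v>\pi^G_v$; $G$ is a Nash equilibrium (for given $\alpha,\bm q$) if every vertex is in best response. $G$ is an $\alpha$-insensitive equilibrium if it is a Nash equilibrium in the add-delete-model for every $\alpha\in(0,1)$.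 *)

(* Defs.v *)
From HB Require Import structures.
From mathcomp Require Import all_boot all_order all_algebra.
Set Implicit Arguments. Unset Strict Implicit. Unset Printing Implicit Defensive.
Import Order.TTheory GRing.Theory Num.Theory.
Local Open Scope ring_scope.

(* Vertices are 'I_n.  A (directed) graph is a relation D : rel 'I_n,
   D u w meaning that w is an out-neighbour of u.  Undirected graphs are
   symmetric irreflexive relations (= bidirected graphs). *)

Definition outdeg n (D : rel 'I_n) (u : 'I_n) : nat := #|[set w | D u w]|.

Section PageRank.
Variable R : numFieldType.

(* Sub-stochastic "walk until v" matrix: from u <> v move to a uniformly
   random out-neighbour with probability (1 - alpha); rows of v and of
   vertices without out-neighbours are 0 (the walk stops / jumps). *)
Definition walk_mx n (D : rel 'I_n) (alpha : R) (v : 'I_n) : 'M[R]_n :=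
  \matrix_(i, j) (if i == v then 0
                  else if D i j then (1 - alpha) / (outdeg D i)%:R else 0).

(* Potential phi_{uv}: probability that the alpha-random walk started at u
   visits v before its first jump.  By first-step analysis it is the unique
   solution x of  x_v = 1,  x_u = (1-alpha)/|Gamma(u)| sum_{w in Gamma(u)} x_w
   (u <> v), i.e. x = (I - walk_mx v)^{-1} e_v
   (= sum_k walk_mx^k e_v = sum over walks u ~> v avoiding v before the end). *)
Definition potential n (D : rel 'I_n) (alpha : R) (u v : 'I_n) : R :=
  (invmx (1%:M - walk_mx D alpha v) *m (\col_j (j == v)%:R)) u ord0.

(* PageRank of v (formula of the paper, meaningful when Gamma(v) <> empty). *)
Definition pagerank n (D : rel 'I_n) (alpha : R) (q : 'I_n -> R) (v : 'I_n) : R :=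
  alpha * (\sum_u q u * potential D alpha u v)
  / (1 - (1 - alpha) / (outdeg D v)%:R
         * \sum_(i | D v i) potential D alpha i v).

(* Graph obtained when v keeps exactly the neighbours in Ev (deleting the
   edges vw, w in Gamma(v) \ Ev) and possibly adds the edge uv (u = Some u0). *)
Definition strategy_graph n (G : rel 'I_n) (v : 'I_n) (Ev : {set 'I_n})
    (u : option 'I_n) : rel 'I_n :=
  fun x y =>
    (G x y && ~~ (((x == v) && (y \notin Ev)) || ((y == v) && (x \notin Ev))))
    || (if u is Some u0 then ((x == v) && (y == u0)) || ((x == u0) && (y == v))
        else false).

Definition is_strategy n (G : rel 'I_n) (v : 'I_n) (Ev : {set 'I_n})
    (u : option 'I_n) : Prop :=
  (forall w, w \in Ev -> G v w) /\
  (if u is Some u0 then u0 != v /\ ~~ G v u0 else True) /\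
  (exists w, strategy_graph G v Ev u v w).

Definition admissible n (G : rel 'I_n) (alpha : R) (q : 'I_n -> R)
    (v : 'I_n) (Ev : {set 'I_n}) (u : option 'I_n) : Prop :=
  if u is Some u0 then
    pagerank G alpha q u0 < pagerank (strategy_graph G v Ev u) alpha q u0
  else True.

Definition best_response n (G : rel 'I_n) (alpha : R) (q : 'I_n -> R)
    (v : 'I_n) : Prop :=
  forall Ev u, is_strategy G v Ev u -> admissible G alpha q v Ev u ->
    ~ (pagerank G alpha q v < pagerank (strategy_graph G v Ev u) alpha q v).

Definition nash_equilibrium n (G : rel 'I_n) (alpha : R) (q : 'I_n -> R) : Prop :=
  forall v, best_response G alpha q v.

Definition alpha_insensitive_equilibrium n (G : rel 'I_n) (q : 'I_n -> R) : Prop :=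
  forall alpha : R, 0 < alpha -> alpha < 1 -> nash_equilibrium G alpha q.

End PageRank.

Definition undirected_graph n (G : rel 'I_n) : Prop :=
  (forall x y, G x y = G y x) /\ (forall x, ~~ G x x).

Definition connected_graph n (G : rel 'I_n) : Prop :=
  forall x y, connect G x y.

Definition complete_graph n (G : rel 'I_n) : Prop :=
  forall x y, x != y -> G x y.

Definition prob_distribution (R : numDomainType) n (q : 'I_n -> R) : Prop :=
  (forall i, 0 <= q i) /\ \sum_i q i = 1.

(* Main.v *)
Require Import Defs.
From HB Require Import structures.
From mathcomp Require Import all_boot all_order all_algebra.
From mathcomp Require Import ring lra zify.
Set Implicit Arguments. Unset Strict Implicit. Unset Printing Implicit Defensive.
Import Order.TTheory GRing.Theory Num.Theory.
Local Open Scope ring_scope.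

Definition avg (R : rcfType) n (D : rel 'I_n) (x : 'I_n -> R) (u : 'I_n) : R :=
  (\sum_(w | D u w) x w) / (outdeg D u)%:R.

Lemma sum_const_out (R : rcfType) n (D : rel 'I_n) u (c : R) :
  \sum_(w | D u w) c = c * (outdeg D u)%:R.
Proof.
rewrite sumr_const /outdeg cardsE mulr_natr //.
Qed.

Lemma walk_mul (R : rcfType) n (D : rel 'I_n) (a : R) v (X : 'cV[R]_n) u :
  (walk_mx D a v *m X) u ord0 =
  if u == v then 0 else (1 - a) * avg D (fun j => X j ord0) u.
Proof.
rewrite mxE; under eq_bigr do rewrite mxE.
case: eqP => _.
  by rewrite big1 // => j _; rewrite mul0r.
rewrite /avg mulr_suml mulr_sumr [RHS]big_mkcond /=; apply: eq_bigr => j _.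
case: (D u j); rewrite ?mul0r ?mulr0 //.
by rewrite -!mulrA [_^-1 * _]mulrC.
Qed.

Lemma ker_unit (R : rcfType) n (A : 'M[R]_n) :
  (forall x : 'cV[R]_n, A *m x = 0 -> x = 0) -> A \in unitmx.
Proof.
move=> H; rewrite -unitmx_tr -row_free_unit -kermx_eq0.
apply/eqP/row_matrixP => i; rewrite row0.
have h1 : row i (kermx A^T) *m A^T = 0 by rewrite -row_mul mulmx_ker row0.
apply: trmx_inj; rewrite trmx0; apply: H.
have -> : A *m (row i (kermx A^T))^T = (row i (kermx A^T) *m A^T)^T.
  by rewrite trmx_mul trmxK.
by rewrite h1 trmx0.
Qed.

Lemma exists_max (R : rcfType) n (x : 'I_n -> R) (i0 : 'I_n) :
  exists i, forall j, x j <= x i.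
Proof.
case: (@arg_maxP _ R _ i0 predT x) => // i _ Hi.
by exists i => j; apply: Hi.
Qed.

Lemma avg_le (R : rcfType) n (D : rel 'I_n) u (x : 'I_n -> R) M :
  (0 < outdeg D u)%N -> (forall w, D u w -> x w <= M) -> avg D x u <= M.
Proof.
move=> d0 H; rewrite /avg ler_pdivrMr ?ltr0n // -sum_const_out.
by apply: ler_sum => w /H.
Qed.

Lemma avg_eq_max (R : rcfType) n (D : rel 'I_n) u (x : 'I_n -> R) M :
  (0 < outdeg D u)%N -> (forall w, D u w -> x w <= M) -> M <= avg D x u ->
  forall w, D u w -> x w = M.
Proof.
move=> d0 H HM.
have e : \sum_(w | D u w) (M - x w) = 0.
  rewrite sumrB sum_const_out; apply/eqP; rewrite subr_eq0 eq_le.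
  rewrite -ler_pdivlMr ?ltr0n // HM /=.
  by rewrite -sum_const_out; apply: ler_sum => w /H.
move=> w Dw; apply/eqP; rewrite eq_sym -subr_eq0; apply/eqP.
apply: (psumr_eq0P _ e) => // i /H; by rewrite subr_ge0.
Qed.

Lemma cp_lt (R : rcfType) n (D : rel 'I_n) v (b : R) (x : 'I_n -> R) :
  0 <= b -> b < 1 -> (forall u, 0 < outdeg D u)%N -> x v <= 0 ->
  (forall u, u != v -> x u <= b * avg D x u) -> forall u, x u <= 0.
Proof.
move=> b0 b1 d0 xv H u.
have [i Hi] := exists_max x v.
apply: le_trans (Hi u) _; rewrite leNgt; apply/negP => xi0.
have iv : i != v by apply/eqP => e; move: xi0; rewrite e ltNge xv.
have := H i iv; have : avg D x i <= x i by apply: avg_le => // w _; apply: Hi.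
move=> h1 h2.
have : b * avg D x i <= b * x i by apply: ler_wpM2l.
nra.
Qed.

Lemma cp_conn (R : rcfType) n (D : rel 'I_n) v (x : 'I_n -> R) :
  (forall u, 0 < outdeg D u)%N -> (forall u, connect D u v) -> x v <= 0 ->
  (forall u, u != v -> x u <= avg D x u) -> forall u, x u <= 0.
Proof.
move=> d0 conn xv H u.
have [i Hi] := exists_max x v.
apply: le_trans (Hi u) _; rewrite leNgt; apply/negP => xi0.
have step : forall p w, path D w p -> x w = x i -> x (last w p) = x i.
  elim=> [|z p IH] w //= /andP [Dwz pz] xw.
  apply: IH => //.
  have wv : w != v by apply/eqP => e; move: xi0; rewrite -xw e ltNge xv.
  apply: (avg_eq_max (d0 w) (fun y _ => Hi y)) Dwz.
  by rewrite -xw; apply: H.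
case/connectP: (conn i) => p pp lp.
have := step p i pp erefl; rewrite -lp => e.
by move: xi0; rewrite -e ltNge xv.
Qed.

Lemma avgD (R : rcfType) n (D : rel 'I_n) (f g : 'I_n -> R) u :
  avg D (fun w => f w + g w) u = avg D f u + avg D g u.
Proof. by rewrite /avg big_split /= mulrDl. Qed.

Lemma avgZ (R : rcfType) n (D : rel 'I_n) (c : R) (f : 'I_n -> R) u :
  avg D (fun w => c * f w) u = c * avg D f u.
Proof. by rewrite /avg -mulr_sumr mulrA. Qed.

Lemma avgN (R : rcfType) n (D : rel 'I_n) (f : 'I_n -> R) u :
  avg D (fun w => - f w) u = - avg D f u.
Proof. by rewrite /avg sumrN mulNr. Qed.

Lemma avgB (R : rcfType) n (D : rel 'I_n) (f g : 'I_n -> R) u :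
  avg D (fun w => f w - g w) u = avg D f u - avg D g u.
Proof. by rewrite avgD avgN. Qed.

Lemma avgC (R : rcfType) n (D : rel 'I_n) (c : R) u :
  (0 < outdeg D u)%N -> avg D (fun _ => c) u = c.
Proof. by move=> d0; rewrite /avg sum_const_out mulfK // pnatr_eq0 -lt0n. Qed.

Lemma entry_AX (R : rcfType) n (D : rel 'I_n) (a : R) v (X : 'cV[R]_n) u :
  ((1%:M - walk_mx D a v) *m X) u ord0 =
  X u ord0 - (if u == v then 0 else (1 - a) * avg D (fun j => X j ord0) u).
Proof. rewrite mulmxBl mul1mx. by rewrite -[in RHS]walk_mul [LHS]mxE; congr (_ + _); rewrite mxE. Qed.

Lemma unit_walk (R : rcfType) n (D : rel 'I_n) (a : R) v :
  0 < a -> a < 1 -> (forall u, 0 < outdeg D u)%N ->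
  1%:M - walk_mx D a v \in unitmx.
Proof.
move=> a0 a1 d0; apply: ker_unit => X AX.
have eq u : X u ord0 = if u == v then 0 else (1 - a) * avg D (fun j => X j ord0) u.
  by apply/eqP; rewrite -subr_eq0 -entry_AX AX mxE.
have b0 : 0 <= 1 - a by lra.
have b1 : 1 - a < 1 by lra.
have le1 := @cp_lt R n D v (1 - a) (fun j => X j ord0) b0 b1 d0.
have le2 := @cp_lt R n D v (1 - a) (fun j => - X j ord0) b0 b1 d0.
apply/matrixP => i j; rewrite ord1 mxE; apply/eqP; rewrite eq_le.
rewrite le1 /=; first last.
- by move=> u /negbTE uv; rewrite eq uv.
- by rewrite eq eqxx.
rewrite -oppr_le0 le2 //.
- by rewrite eq eqxx oppr0.
- by move=> u /negbTE uv; rewrite eq uv avgN mulrN.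
Qed.

Lemma unit_walk0 (R : rcfType) n (D : rel 'I_n) v :
  (forall u, 0 < outdeg D u)%N -> (forall u, connect D u v) ->
  1%:M - walk_mx D (0 : R) v \in unitmx.
Proof.
move=> d0 conn; apply: ker_unit => X AX.
have eq u : X u ord0 = if u == v then 0 else (1 - 0) * avg D (fun j => X j ord0) u.
  by apply/eqP; rewrite -subr_eq0 -entry_AX AX mxE.
have le1 := @cp_conn R n D v (fun j => X j ord0) d0 conn.
have le2 := @cp_conn R n D v (fun j => - X j ord0) d0 conn.
apply/matrixP => i j; rewrite ord1 mxE; apply/eqP; rewrite eq_le.
rewrite le1 /=; first last.
- by move=> u /negbTE uv; rewrite eq uv subr0 mul1r.
- by rewrite eq eqxx.
rewrite -oppr_le0 le2 //.
- by rewrite eq eqxx oppr0.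
- by move=> u /negbTE uv; rewrite eq uv avgN subr0 mul1r.
Qed.

Lemma pot_sat (R : rcfType) n (D : rel 'I_n) (a : R) v :
  0 < a -> a < 1 -> (forall u, 0 < outdeg D u)%N ->
  potential D a v v = 1 /\
  forall u, u != v -> potential D a u v = (1 - a) * avg D (fun j => potential D a j v) u.
Proof.
move=> a0 a1 d0; have uA := unit_walk v a0 a1 d0.
have AX := mulKVmx uA (\col_j (j == v)%:R).
have eq u : potential D a u v - (if u == v then 0 else
    (1 - a) * avg D (fun j => potential D a j v) u) = (u == v)%:R.
  by rewrite /potential -entry_AX AX mxE.
split; first by have := eq v; rewrite eqxx subr0.
by move=> u /negbTE uv; have := eq u; rewrite uv => /eqP; rewrite subr_eq0 => /eqP.
Qed.

Lemma pot_uniq (R : rcfType) n (D : rel 'I_n) (a : R) v (f : 'I_n -> R) :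
  0 < a -> a < 1 -> (forall u, 0 < outdeg D u)%N ->
  f v = 1 -> (forall u, u != v -> f u = (1 - a) * avg D f u) ->
  forall u, potential D a u v = f u.
Proof.
move=> a0 a1 d0 fv fu.
have [pv pu] := pot_sat v a0 a1 d0.
have b0 : 0 <= 1 - a by lra.
have b1 : 1 - a < 1 by lra.
have le1 := @cp_lt R n D v (1 - a) (fun j => potential D a j v - f j) b0 b1 d0.
have le2 := @cp_lt R n D v (1 - a) (fun j => f j - potential D a j v) b0 b1 d0.
move=> u; apply/eqP; rewrite eq_le -subr_le0 le1 /=; first last.
- by move=> w wv; rewrite avgB mulrBr -fu // -pu.
- by rewrite pv fv subrr.
rewrite -subr_le0 le2 //.
- by rewrite pv fv subrr.
- by move=> w wv; rewrite avgB mulrBr -fu // -pu.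
Qed.

Lemma solve0 (R : rcfType) n (D : rel 'I_n) v (g : 'I_n -> R) :
  (forall u, 0 < outdeg D u)%N -> (forall u, connect D u v) ->
  exists x : 'I_n -> R, x v = 0 /\ forall u, u != v -> x u = g u + avg D x u.
Proof.
move=> d0 conn; have uA := @unit_walk0 R n D v d0 conn.
have AX := mulKVmx uA (\col_j (if j == v then 0 else g j)).
set X := invmx _ *m _ in AX.
exists (fun j => X j ord0).
have eq u : X u ord0 - (if u == v then 0 else
    (1 - 0) * avg D (fun j => X j ord0) u) = if u == v then 0 else g u.
  by rewrite -entry_AX AX mxE.
split; first by have := eq v; rewrite eqxx subr0.
move=> u /negbTE uv; have := eq u; rewrite uv subr0 mul1r => <-.
by rewrite subrK.
Qed.

Lemma avg_ge0 (R : rcfType) n (D : rel 'I_n) (f : 'I_n -> R) u :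
  (forall w, 0 <= f w) -> 0 <= avg D f u.
Proof. by move=> H; rewrite /avg divr_ge0 // sumr_ge0. Qed.

Lemma avg_mono (R : rcfType) n (D : rel 'I_n) (f g : 'I_n -> R) u :
  (forall w, f w <= g w) -> avg D f u <= avg D g u.
Proof. by move=> H; rewrite /avg ler_wpM2r // ?invr_ge0 // ler_sum. Qed.

Lemma kac (R : rcfType) n (D : rel 'I_n) v (h : 'I_n -> R) :
  (forall x y, D x y = D y x) -> (forall u, 0 < outdeg D u)%N ->
  h v = 0 -> (forall u, u != v -> h u = 1 + avg D h u) ->
  (1 + avg D h v) * (outdeg D v)%:R = \sum_u (outdeg D u)%:R.
Proof.
move=> sym d0 hv hu.
have dn0 u : (outdeg D u)%:R != 0 :> R by rewrite pnatr_eq0 -lt0n.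
have e1 : \sum_u (1 + avg D h u) * (outdeg D u)%:R =
    \sum_u (outdeg D u)%:R + \sum_u h u * (outdeg D u)%:R.
  rewrite [LHS](eq_bigr (fun u =>
      (outdeg D u)%:R + \sum_(w | D u w) h w)); last first.
    by move=> u _; rewrite mulrDl mul1r /avg divfK.
  rewrite big_split /=; congr (_ + _).
  under eq_bigr do rewrite big_mkcond /=.
  rewrite exchange_big /=; apply: eq_bigr => w _.
  rewrite -big_mkcond /= (eq_bigl (fun u => D w u)) ?sum_const_out //.
have e2 : \sum_u (1 + avg D h u) * (outdeg D u)%:R =
    (1 + avg D h v) * (outdeg D v)%:R + \sum_u h u * (outdeg D u)%:R.
  rewrite (bigD1 v) //= [X in _ = _ + X](bigD1 v) //= hv mul0r add0r.
  congr (_ + _); apply: eq_bigr => u uv; by rewrite -hu.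
by apply: (addIr (\sum_u h u * (outdeg D u)%:R)); rewrite -e2 e1.
Qed.

Lemma q_le1 (R : rcfType) n (q : 'I_n -> R) u :
  prob_distribution q -> q u <= 1.
Proof.
case=> q0 q1; rewrite -q1 (bigD1 u) //= lerDl sumr_ge0 //.
Qed.

Lemma pr_bounds (R : rcfType) n (D : rel 'I_n) v (q : 'I_n -> R) :
  (forall x y, D x y = D y x) -> (forall u, 0 < outdeg D u)%N ->
  (forall u, connect D u v) -> prob_distribution q ->
  exists A H K : R, [/\ 0 <= A, 0 <= H, 0 <= K,
    (1 + A) * (outdeg D v)%:R = \sum_u (outdeg D u)%:R &
    forall a, 0 < a -> a < 1 -> exists N b,
      [/\ pagerank D a q v = N / (1 + (1 - a) * b), 1 - a * H <= N, N <= 1,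
          0 <= b & A - a * K <= b <= A]].
Proof.
move=> sym d0 conn qP.
have [h [hv hu]] := @solve0 R n D v (fun _ => 1) d0 conn.
have h0 : forall u, 0 <= h u.
  move=> u; rewrite -oppr_le0; move: u; apply: (cp_conn (x := fun j => - h j)) => //.
    by rewrite hv oppr0.
  by move=> u uv; rewrite hu // avgN; lra.
have [k [kv ku]] := @solve0 R n D v (fun u => avg D h u) d0 conn.
have k0 : forall u, 0 <= k u.
  move=> u; rewrite -oppr_le0; move: u; apply: (cp_conn (x := fun j => - k j)) => //.
    by rewrite kv oppr0.
  by move=> u uv; have := avg_ge0 D u h0; rewrite ku // avgN; lra.
exists (avg D h v), (\sum_u h u), (avg D k v); split.
- exact: avg_ge0.
- exact: sumr_ge0.
- exact: avg_ge0.
- exact: kac.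
move=> a a0 a1.
have [pv pu] := pot_sat v a0 a1 d0.
set phi := fun j => potential D a j v.
have b0 : 0 <= 1 - a by lra.
have b1 : 1 - a < 1 by lra.
have avg1 u : avg D (fun _ => 1 : R) u = 1 := avgC (1 : R) (d0 u).
have P1 : forall u, phi u <= 1.
  move=> u; rewrite -subr_le0; move: u.
  apply: (cp_lt (v := v) (x := fun j => phi j - 1) b0 b1 d0).
    by rewrite /phi /= pv subrr.
  move=> u uv; rewrite /= avgB avg1 /phi pu //; lra.
have P2 : forall u, 1 - a * h u <= phi u.
  move=> u; rewrite -subr_le0; move: u.
  apply: (cp_lt (v := v) (x := fun j => 1 - a * h j - phi j) b0 b1 d0).
    by rewrite /phi /= pv hv mulr0 subr0 subrr.
  move=> u uv; rewrite /= !avgB avg1 avgZ /phi pu // hu //.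
  have : 0 <= avg D h u := avg_ge0 _ _ h0.
  nra.
have P3 : forall u, phi u <= 1 - a * h u + a ^+ 2 * k u.
  move=> u; rewrite -subr_le0; move: u.
  apply: (cp_lt (v := v) (x := fun j => phi j - (1 - a * h j + a ^+ 2 * k j)) b0 b1 d0).
    by rewrite /phi /= pv hv kv !mulr0 subr0 addr0 subrr.
  move=> u uv; rewrite /= avgB avgD avgB avg1 !avgZ /phi pu // hu // ku //.
  have kk : 0 <= avg D k u := avg_ge0 _ _ k0.
  have := mulr_ge0 (exprn_ge0 3 (ltW a0)) kk.
  nra.
set P := avg D phi v.
exists (\sum_u q u * phi u), ((1 - P) / a).
have an0 : a != 0 by rewrite gt_eqF.
have PA : 1 - a * avg D h v <= P.
  rewrite /P -[X in X - _](avg1 v) -avgZ -avgB; apply: avg_mono => w; exact: P2.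
have PB : P <= 1 - a * avg D h v + a ^+ 2 * avg D k v.
  rewrite /P -[X in X - _](avg1 v) -!avgZ -avgB -avgD; apply: avg_mono => w; exact: P3.
have PC : P <= 1.
  rewrite /P -[X in _ <= X](avg1 v); apply: avg_mono => w; exact: P1.
case: qP => q0 q1.
split.
- rewrite /pagerank /P /avg -/phi.
  set S := \sum_(i | D v i) phi i.
  set d := (outdeg D v)%:R.
  have -> : \sum_u q u * potential D a u v = \sum_u q u * phi u by [].
  have dn0 : d != 0 by rewrite pnatr_eq0 -lt0n.
  have -> : 1 - (1 - a) / d * S = a * (1 + (1 - a) * ((1 - S / d) / a)).
    by field; rewrite an0 dn0.
  by rewrite -mulf_div divff // mul1r.
- have e : \sum_u q u * (1 - a * h u) = 1 - a * \sum_u q u * h u.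
    rewrite mulr_sumr -[X in _ = X - _]q1 -sumrB; apply: eq_bigr => u _; ring.
  have l1 : \sum_u q u * h u <= \sum_u h u.
    by apply: ler_sum => u _; rewrite ler_piMl // q_le1.
  apply: le_trans (_ : \sum_u q u * (1 - a * h u) <= _); last first.
    by apply: ler_sum => u _; rewrite ler_wpM2l.
  rewrite e lerB // ler_wpM2l //; exact: ltW.
- rewrite -q1; apply: ler_sum => u _; rewrite ler_piMr //.
- rewrite divr_ge0 //; [lra | exact: ltW].
- rewrite ler_pdivlMr // ler_pdivrMr //; apply/andP; split; nra.
Qed.

Lemma compare_lim (R : rcfType) (A K A' H' : R) :
  0 <= A -> 0 <= K -> 0 <= H' -> A' < A ->
  exists delta : R, 0 < delta /\ forall a, 0 < a -> a <= delta ->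
    forall N b N' b', N <= 1 -> 0 <= b -> A - a * K <= b -> b <= A ->
      1 - a * H' <= N' -> 0 <= b' -> b' <= A' ->
      N / (1 + (1 - a) * b) < N' / (1 + (1 - a) * b').
Proof.
move=> A0 K0 H0 AA.
set g := A - A'; set C := K + H' * (1 + A).
have g0 : 0 < g by rewrite /g subr_gt0.
have C0 : 0 <= C by rewrite /C addr_ge0 // mulr_ge0 // addr_ge0.
have den0 : 0 < 2 * (C + g + 1) by lra.
exists (g / (2 * (C + g + 1))); split; first by rewrite divr_gt0.
move=> a a0 ad N b N' b' N1 b0 bA bA' N'1 b'0 b'A.
have ad' : a * (2 * (C + g + 1)) <= g by rewrite -ler_pdivlMr.
have ag : 0 < a * g by rewrite mulr_gt0.
have aC0 : 0 <= a * C by rewrite mulr_ge0 // ltW.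
have a2 : 2 * a < 1.
  have h : (2 * a) * (g + 1) < 1 * (g + 1) by lra.
  by rewrite ltr_pM2r in h; lra.
have aC : 2 * (a * C) < g by lra.
have be0 : 0 < 1 - a by lra.
have d1 : 0 < 1 + (1 - a) * b by rewrite ltr_pwDl // mulr_ge0 // ltW.
have d2 : 0 < 1 + (1 - a) * b' by rewrite ltr_pwDl // mulr_ge0 // ltW.
rewrite ltr_pdivrMr // mulrAC ltr_pdivlMr //.
have s1 : N * (1 + (1 - a) * b') <= 1 + (1 - a) * A'.
  apply: le_trans (_ : 1 + (1 - a) * b' <= _).
    by rewrite ler_piMl // ltW.
  by rewrite lerD2l ler_wpM2l // ltW.
have s2 : (1 - a * H') * (1 + (1 - a) * b) <= N' * (1 + (1 - a) * b).
  by rewrite ler_wpM2r // ltW.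
have s3 : (1 - a) * b <= A.
  by apply: le_trans bA'; rewrite ler_piMl //; lra.
have s4 : a * H' * ((1 - a) * b) <= a * H' * A.
  by rewrite ler_wpM2l // mulr_ge0 // ltW.
have s5 : (1 - a) * (A - a * K) <= (1 - a) * b by rewrite ler_wpM2l // ltW.
have s6 : (1 - a) * (a * K) <= a * K by rewrite ler_piMl ?mulr_ge0 // ?ltW //; lra.
have s7 : (1 - a) * g > g / 2.
  have h : (2 * a) * g < 1 * g by rewrite ltr_pM2r.
  lra.
rewrite /C in aC; rewrite /g in s7.
move: aC s7; rewrite /g => aC s7; clear ad' ag aC0 d1 d2 den0; lra.
Qed.

Lemma deg_pos n (G : rel 'I_n) :
  connected_graph G -> (exists w1 w2 : 'I_n, w1 != w2) ->
  forall u, (0 < outdeg G u)%N.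
Proof.
move=> conn [w1 [w2 w12]] u.
have [w uw] : exists w, u != w.
  case: (eqVneq u w1) => [e|]; last by exists w1.
  by exists w2; rewrite e.
case/connectP: (conn u w) => -[|z p] /=; first by move=> _ e; move: uw; rewrite e eqxx.
case/andP => Guz _ _; apply/card_gt0P; exists z; by rewrite inE.
Qed.

Definition addE n (G : rel 'I_n) x y : rel 'I_n :=
  fun a b => G a b || ((a == x) && (b == y)) || ((a == y) && (b == x)).

Lemma Gp_eq n (G : rel 'I_n) x y :
  undirected_graph G ->
  forall a b, strategy_graph G x [set w | G x w] (Some y) a b = addE G x y a b.
Proof.
case=> sym irr a b; rewrite /strategy_graph /addE !inE.
case Gab: (G a b) => //=.
by apply/orP; left; apply/negP => /orP [] /andP [/eqP e]; [rewrite -e Gab | rewrite -e sym Gab].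
Qed.

Lemma outdeg_addE n (G : rel 'I_n) x y a :
  undirected_graph G -> x != y -> ~~ G x y ->
  outdeg (addE G x y) a = (outdeg G a + (a == x) + (a == y))%N.
Proof.
case=> sym irr xy nG.
rewrite /outdeg.
case: (eqVneq a x) => [->|ax].
  rewrite (negbTE xy) /= addn0 addn1.
  have -> : [set w | addE G x y x w] = y |: [set w | G x w].
    by apply/setP => w; rewrite !inE /addE eqxx /= (negbTE xy) /= orbF orbC.
  by rewrite cardsU1 inE (negbTE nG).
case: (eqVneq a y) => [->|ay].
  rewrite /= addn0 addn1.
  have -> : [set w | addE G x y y w] = x |: [set w | G y w].
    by apply/setP => w; rewrite !inE /addE eqxx /= (eq_sym y x) (negbTE xy) /= orbF orbC.
  by rewrite cardsU1 inE sym (negbTE nG).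
rewrite /= !addn0; apply: eq_card => w; rewrite !inE /addE (negbTE ax) (negbTE ay).
by rewrite !orbF.
Qed.

Lemma sum_ind (R : rcfType) n (x : 'I_n) : \sum_a ((a == x)%:R : R) = 1.
Proof. by rewrite (bigD1 x) //= eqxx big1 ?addr0 // => a /negbTE ->. Qed.

Lemma sum_addE (R : rcfType) n (G : rel 'I_n) x y :
  undirected_graph G -> x != y -> ~~ G x y ->
  \sum_a ((outdeg (addE G x y) a)%:R : R) = \sum_a (outdeg G a)%:R + 2.
Proof.
move=> uG xy nG.
under eq_bigr do rewrite (outdeg_addE _ uG xy nG) !natrD.
by rewrite !big_split /= !sum_ind -addrA.
Qed.

Lemma deg_lt (R : rcfType) n (G : rel 'I_n) x y :
  undirected_graph G -> (forall u, 0 < outdeg G u)%N -> x != y -> ~~ G x y ->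
  2 * ((outdeg G x)%:R : R) < \sum_a (outdeg G a)%:R.
Proof.
case=> sym irr d0 xy nG.
rewrite (bigD1 x) //= (bigD1 y) /=; last by rewrite eq_sym.
have l1 : \sum_(a | G x a) ((outdeg G a)%:R : R) <=
          \sum_(a | (a != x) && (a != y)) (outdeg G a)%:R.
  rewrite big_mkcond [X in _ <= X]big_mkcond; apply: ler_sum => a _.
  case Gxa: (G x a); last by case: ifP.
  have H : (a != x) && (a != y).
    apply/andP; split; apply/eqP => e; [by move: (irr x); rewrite -{2}e Gxa
                                         | by move: nG; rewrite -e Gxa].
  by rewrite H.
have l2 : ((outdeg G x)%:R : R) <= \sum_(a | G x a) (outdeg G a)%:R.
  rewrite -[X in X <= _]mul1r -sum_const_out; apply: ler_sum => b _.
  by rewrite ler1n d0.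
have l3 : (1 : R) <= (outdeg G y)%:R by rewrite ler1n d0.
lra.
Qed.

Lemma A_lt (R : rcfType) (A A' d S : R) :
  1 <= d -> 2 * d < S -> (1 + A) * d = S -> (1 + A') * (d + 1) = S + 2 -> A' < A.
Proof.
move=> d1 dS e1 e2.
have e : (A - A') * (d * (d + 1)) = S - 2 * d.
  have e1' : A * d = S - d by rewrite -e1; ring.
  have e2' : A' * (d + 1) = S + 1 - d by rewrite mulrDl mul1r in e2; lra.
  have -> : (A - A') * (d * (d + 1)) = (A * d) * (d + 1) - (A' * (d + 1)) * d by ring.
  rewrite e1' e2'; ring.
have p : 0 < d * (d + 1) by rewrite mulr_gt0 //; lra.
rewrite -subr_gt0 -(pmulr_lgt0 _ p) e; lra.
Qed.

Lemma outdeg_ext n (D D' : rel 'I_n) u :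
  (forall a b, D a b = D' a b) -> outdeg D u = outdeg D' u.
Proof. by move=> H; rewrite /outdeg; apply: eq_card => w; rewrite !inE H. Qed.

Lemma dir2 (R : rcfType) n (G : rel 'I_n) (q : 'I_n -> R) :
  undirected_graph G -> connected_graph G -> prob_distribution q ->
  alpha_insensitive_equilibrium G q -> complete_graph G.
Proof.
move=> uG conn qP E x y xy; apply/negPn/negP => nG.
have uG' := uG; case: uG' => sym irr.
have d0 := deg_pos conn (ex_intro _ x (ex_intro _ y xy)).
set Dp := strategy_graph G x [set w | G x w] (Some y).
have Dpe : forall a b, Dp a b = addE G x y a b := @Gp_eq n G x y uG.
have symp : forall a b, Dp a b = Dp b a.
  move=> a b; rewrite !Dpe /addE sym.
  by case: (G b a); case: (a == x); case: (b == y); case: (a == y); case: (b == x).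
have connp : connected_graph Dp.
  move=> a b; apply: (connect_sub _ (conn a b)) => c e Gce; apply: connect1.
  by rewrite Dpe /addE Gce.
have d0p := deg_pos connp (ex_intro _ x (ex_intro _ y xy)).
have odx : outdeg Dp x = (outdeg G x).+1.
  by rewrite (outdeg_ext _ Dpe) (outdeg_addE _ uG xy nG) eqxx (negbTE xy) /= addn0 addn1.
have ody : outdeg Dp y = (outdeg G y).+1.
  by rewrite (outdeg_ext _ Dpe) (outdeg_addE _ uG xy nG) eqxx eq_sym (negbTE xy) /= addn0 addn1.
have sump : \sum_a ((outdeg Dp a)%:R : R) = \sum_a (outdeg G a)%:R + 2.
  by under eq_bigr do rewrite (outdeg_ext _ Dpe); rewrite sum_addE.
have yx : y != x by rewrite eq_sym.
have nG' : ~~ G y x by rewrite sym.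
have [A1 [H1 [K1 [A10 H10 K10 kac1 B1]]]] := @pr_bounds R n G x q sym d0 (fun u => conn u x) qP.
have [A1' [H1' [K1' [A10' H10' K10' kac1' B1']]]] := @pr_bounds R n Dp x q symp d0p (fun u => connp u x) qP.
have [A2 [H2 [K2 [A20 H20 K20 kac2 B2]]]] := @pr_bounds R n G y q sym d0 (fun u => conn u y) qP.
have [A2' [H2' [K2' [A20' H20' K20' kac2' B2']]]] := @pr_bounds R n Dp y q symp d0p (fun u => connp u y) qP.
have lt1 : A1' < A1.
  apply: (@A_lt R A1 A1' (outdeg G x)%:R (\sum_a (outdeg G a)%:R)) => //.
  - by rewrite ler1n d0.
  - exact: (deg_lt _ uG d0 xy nG).
  - by rewrite -sump -kac1' odx -natr1.
have lt2 : A2' < A2.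
  apply: (@A_lt R A2 A2' (outdeg G y)%:R (\sum_a (outdeg G a)%:R)) => //.
  - by rewrite ler1n d0.
  - exact: (deg_lt _ uG d0 yx nG').
  - by rewrite -sump -kac2' ody -natr1.
have [de1 [de10 C1]] := compare_lim A10 K10 H10' lt1.
have [de2 [de20 C2]] := compare_lim A20 K20 H20' lt2.
set a := Num.min (Num.min de1 de2) (1 / 2).
have a0 : 0 < a by rewrite !lt_min de10 de20 /=; lra.
have a1 : a < 1 by apply: (@le_lt_trans _ _ (1 / 2)); [rewrite /a ge_min le_refl orbT | lra].
have ad1 : a <= de1 by rewrite /a !ge_min le_refl.
have ad2 : a <= de2 by rewrite /a !ge_min le_refl !orbT.
have cmpx : pagerank G a q x < pagerank Dp a q x.
  have [N [b [e1 N1 N2 b0 /andP[b1 b2]]]] := B1 a a0 a1.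
  have [N' [b' [e1' N1' N2' b0' /andP[b1' b2']]]] := B1' a a0 a1.
  rewrite e1 e1'; exact: C1.
have cmpy : pagerank G a q y < pagerank Dp a q y.
  have [N [b [e1 N1 N2 b0 /andP[b1 b2]]]] := B2 a a0 a1.
  have [N' [b' [e1' N1' N2' b0' /andP[b1' b2']]]] := B2' a a0 a1.
  rewrite e1 e1'; exact: C2.
apply: (E a a0 a1 x [set w | G x w] (Some y)) => //.
split; first by move=> w; rewrite inE.
split; first by split.
by exists y; rewrite (@Gp_eq n G x y uG) /addE !eqxx orbT.
Qed.

Definition sc (R : rcfType) (a k m : R) := a * (m - 1) + k.
Definition sD (R : rcfType) (a k m : R) :=
  (k + m - (1 - a) * (k - 1)) * sc a k m - (1 - a) ^+ 2 * m * k.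
Definition sXA (R : rcfType) (a k m : R) := (1 - a) * sc a k m / sD a k m.
Definition sXB (R : rcfType) (a k m : R) := (1 - a) ^+ 2 * k / sD a k m.
Definition sY (R : rcfType) (a s : R) := (1 - a) / (1 + a * (s - 1)).

Lemma star_nums (R : rcfType) (a k m : R) :
  0 < a -> a < 1 -> 1 <= k -> (m = 0 \/ 1 <= m) ->
  [/\ 0 < sD a k m, 0 <= sXB a k m, sXB a k m <= sXA a k m,
      sXA a k m <= sY a (k + m) &
      (sY a (k + m) <= 1 - a /\ (m = 0 -> sXA a k m = sY a (k + m)))].
Proof.
move=> a0 a1 k1 hm.
have m0 : 0 <= m by case: hm => [->|m1]; lra.
have am : 0 <= a * (m - 1 + k) by rewrite mulr_ge0 //; lra.
have c0 : 0 < sc a k m.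
  rewrite /sc; case: hm => [->|m1]; first lra.
  have : 0 <= a * (m - 1) by rewrite mulr_ge0 //; lra.
  lra.
have cb : (1 - a) * k <= sc a k m by rewrite /sc; lra.
have D0 : 0 < sD a k m.
  have ak : 0 <= a * (k - 1) by rewrite mulr_ge0 //; lra.
  rewrite /sD; case: hm => [em|m1].
    move: c0; rewrite em mulr0 mul0r subr0 addr0 => c0.
    rewrite mulr_gt0 //; lra.
  have h1 : (1 + m) * k <= (k + m - (1 - a) * (k - 1)) * sc a k m.
    rewrite /sc; apply: ler_pM; nra.
  have h2 : (1 - a) ^+ 2 * m * k <= m * k.
    rewrite -mulrA ler_piMl //; [nra | ].
    rewrite expr2; nra.
  nra.
have Y1 : 0 < 1 + a * (k + m - 1) by case: hm => [->|m1]; nra.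
split.
- exact: D0.
- rewrite /sXB divr_ge0 ?mulr_ge0 ?exprn_ge0 ?(ltW D0) //; lra.
- rewrite /sXB /sXA ler_pM2r ?invr_gt0 // expr2 -mulrA ler_pM2l; [exact: cb | lra].
- rewrite /sXA /sY ler_pdivrMr // mulrAC ler_pdivlMr //.
  rewrite -mulrA ler_pM2l; last lra.
  have h : 0 <= (1 - a) * m * (sc a k m - (1 - a) * k).
    by rewrite mulr_ge0 ?subr_ge0 // mulr_ge0 //; lra.
  have e : sD a k m - sc a k m * (1 + a * (k + m - 1)) =
           (1 - a) * m * (sc a k m - (1 - a) * k) by rewrite /sD /sc; ring.
  lra.
split.
  have akm : 0 <= a * (k + m - 1) by rewrite mulr_ge0 //; lra.
  rewrite /sY ler_pdivrMr // ler_peMr; lra.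
  move=> em; rewrite /sXA /sY /sD /sc em.
  have h : k - a != 0 by apply/eqP => e; nra.
  have h' : 1 + a * (k + 0 - 1) != 0 by rewrite addr0; apply/eqP => e; nra.
  have h'' : k + 0 - (1 - a) * (k - 1) != 0 by apply/eqP => e; nra.
  field; rewrite ?h ?h' ?h'' ?addr0 //.
  apply/andP; split; apply/eqP => e; nra.
Qed.

Lemma sum3 (R : rcfType) n v (E : {set 'I_n}) (f : 'I_n -> R) :
  v \notin E ->
  \sum_w f w = f v + \sum_(w in E) f w + \sum_(w in [set w | (w != v) && (w \notin E)]) f w.
Proof.
move=> vE; rewrite (bigD1 v) //= -addrA; congr (_ + _).
rewrite (bigID (fun w => w \in E)) /=; congr (_ + _).
  apply: eq_bigl => w; case wE: (w \in E); rewrite ?andbF //= andbT.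
  by apply/eqP => e; move: vE; rewrite -e wE.
by apply: eq_bigl => w; rewrite inE.
Qed.

Lemma star_pr (R : rcfType) n (D : rel 'I_n) v (E : {set 'I_n}) (q : 'I_n -> R) (a : R) :
  0 < a -> a < 1 -> prob_distribution q -> v \notin E -> (0 < #|E|)%N ->
  (forall x y, D x y = (x != y) && ~~ (((x == v) && (y \notin E)) || ((y == v) && (x \notin E)))) ->
  let Y := sY a (n%:R - 1) in
  let F := a * (q v + (1 - q v) * Y) / (1 - (1 - a) * Y) in
  pagerank D a q v <= F /\ ((forall w, w != v -> w \in E) -> pagerank D a q v = F).
Proof.
move=> a0 a1 qP vE E0 De Y F.
set B := [set w | (w != v) && (w \notin E)].
set k := #|E|; set m := #|B|.
have nR : (n%:R : R) = 1 + k%:R + m%:R.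
  have := sum3 (fun _ => 1 : R) vE.
  by rewrite !sumr_const card_ord -/B -/k -/m.
have k1 : (1 : R) <= k%:R by rewrite ler1n.
have hm : (m%:R : R) = 0 \/ 1 <= (m%:R : R).
  by case: (m) => [|m']; [left | right; rewrite ler1n].
have [D0 XB0 XBA XAY [Yb XAe]] := star_nums a0 a1 k1 hm.
set XA := sXA a k%:R m%:R; set XB := sXB a k%:R m%:R.
move: XB0 XBA XAY XAe; rewrite -/XA -/XB => XB0 XBA XAY XAe.
have eY : Y = sY a (k%:R + m%:R) by rewrite /Y nR; congr sY; ring.
have NV : forall f : 'I_n -> R, \sum_(w | D v w) f w = \sum_(w in E) f w.
  move=> f; apply: eq_bigl => w; rewrite De eqxx /=.
  case: (eqVneq w v) => [->|wv]; first by rewrite (negbTE vE).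
  by rewrite /= orbF negbK.
have NA : forall u (f : 'I_n -> R), u \in E -> \sum_(w | D u w) f w = \sum_w f w - f u.
  move=> u f uE; rewrite [in RHS](bigD1 u) //= addrC addrK; apply: eq_bigl => w.
  have uv : (u == v) = false by apply/eqP => e; move: vE; rewrite -e uE.
  by rewrite De uv uE /= andbF andbT eq_sym.
have NB : forall u (f : 'I_n -> R), u \in B -> \sum_(w | D u w) f w = \sum_w f w - f u - f v.
  move=> u f; rewrite inE => /andP [uv uE].
  rewrite [in RHS](bigD1 u) //= [in RHS](bigD1 v) /=; last by rewrite eq_sym.
  rewrite addrC addrK addrC addrK; apply: eq_bigl => w.
  by rewrite De (negbTE uv) (negbTE uE) /= andbT eq_sym.
set x := fun w => if w == v then 1 else if w \in E then XA else XB.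
have xE : forall w, w \in E -> x w = XA.
  move=> w wE; rewrite /x wE; case: eqP => // e; by move: vE; rewrite -e wE.
have xB : forall w, w \in B -> x w = XB.
  move=> w; rewrite inE /x => /andP [/negbTE -> /negbTE ->].
  by [].
have Sx : \sum_w x w = 1 + k%:R * XA + m%:R * XB.
  rewrite (sum3 x vE) -/B (eq_bigr (fun _ => XA) xE) (eq_bigr (fun _ => XB) xB).
  by rewrite !sumr_const -/k -/m /x eqxx !mulr_natl.
have S1 : \sum_(w : 'I_n) (1 : R) = 1 + k%:R + m%:R.
  by rewrite sumr_const card_ord nR.
have dv : ((outdeg D v)%:R : R) = k%:R.
  by rewrite -[LHS]mul1r -sum_const_out NV sumr_const.
have dE : forall u, u \in E -> ((outdeg D u)%:R : R) = k%:R + m%:R.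
  move=> u uE; rewrite -[LHS]mul1r -sum_const_out NA // S1; ring.
have dB : forall u, u \in B -> ((outdeg D u)%:R : R) = k%:R + m%:R - 1.
  move=> u uB; rewrite -[LHS]mul1r -sum_const_out NB // S1; ring.
have m1B : forall u, u \in B -> (1 : R) <= m%:R.
  move=> u uB; rewrite ler1n; apply/card_gt0P; by exists u.
have caseu : forall u, u != v -> (u \in E) \/ (u \in B).
  move=> u uv; case uE: (u \in E); [by left | right].
  by rewrite inE uv uE.
have d0 : forall u, (0 < outdeg D u)%N.
  move=> u; rewrite -(ltr0n R).
  case: (eqVneq u v) => [->|uv]; first by rewrite dv; lra.
  case: (caseu u uv) => h; first by rewrite dE //; have := ler0n R m; lra.
  by rewrite dB //; have := m1B u h; lra.
have pot : forall u, potential D a u v = x u.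
  apply: pot_uniq => //; first by rewrite /x eqxx.
  move=> u uv; rewrite /avg.
  have sD0 : sD a k%:R m%:R != 0 by rewrite gt_eqF.
  case: (caseu u uv) => h.
    rewrite NA // Sx dE // xE //.
    have km : k%:R + m%:R != 0 :> R by apply/eqP => e; have := ler0n R m; lra.
    rewrite /XA /XB /sXA /sXB; move: sD0; rewrite /sD /sc => sD0.
    field; rewrite sD0 km //.
  rewrite NB // Sx dB // xB // /x eqxx.
  have km : k%:R + m%:R - 1 != 0 :> R by apply/eqP => e; have := m1B u h; lra.
  rewrite /XA /XB /sXA /sXB; move: sD0; rewrite /sD /sc => sD0.
  field; rewrite sD0 km //.
have kn0 : k%:R != 0 :> R by apply/eqP => e; lra.
have epr : pagerank D a q v = a * (\sum_u q u * x u) / (1 - (1 - a) * XA).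
  rewrite /pagerank; under eq_bigr do rewrite pot.
  have -> : \sum_(i | D v i) potential D a i v = \sum_(i | D v i) x i by apply: eq_bigr => i _; rewrite pot.
  rewrite NV (eq_bigr (fun _ => XA) xE) sumr_const -/k dv -mulr_natr.
  by congr (_ / (1 - _)); field.
case: qP => q0 q1.
have qv1 : q v <= 1 by apply: q_le1.
have sq : \sum_(u | u != v) q u = 1 - q v.
  by rewrite -q1 [in RHS](bigD1 v) //= addrC addrK.
have eN : \sum_u q u * x u = q v + \sum_(u | u != v) q u * x u.
  by rewrite (bigD1 v) //= /x eqxx mulr1.
have XA0 : 0 <= XA by apply: le_trans XBA.
have Y0 : (1 - a) * Y < 1.
  have h : (1 - a) * Y <= Y by rewrite ler_piMl ?eY; [lra | apply: le_trans XAY | lra].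
  rewrite eY in h *; lra.
have XA1 : 0 < 1 - (1 - a) * XA.
  have : (1 - a) * XA <= XA by rewrite ler_piMl //; lra.
  lra.
have fmono : a * (q v + (1 - q v) * XA) / (1 - (1 - a) * XA) <= F.
  have Y1 : 0 < 1 - (1 - a) * Y by lra.
  rewrite /F ler_pdivrMr // mulrAC ler_pdivlMr //.
  have e : a * (q v + (1 - q v) * Y) * (1 - (1 - a) * XA) -
           a * (q v + (1 - q v) * XA) * (1 - (1 - a) * Y) =
           a * (Y - XA) * ((1 - q v) + q v * (1 - a)) by ring.
  have : 0 <= a * (Y - XA) * ((1 - q v) + q v * (1 - a)).
    rewrite !mulr_ge0 //; try lra. have qv0 := q0 v. have : 0 <= q v * (1 - a) by rewrite mulr_ge0 //; lra. lra.
  lra.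
split.
  rewrite epr; apply: le_trans fmono.
  rewrite ler_wpM2r ?invr_ge0 ?(ltW XA1) // ler_wpM2l ?(ltW a0) //.
  rewrite eN lerD2l -sq mulr_suml; apply: ler_sum => u uv.
  rewrite ler_wpM2l //.
  case: (caseu u uv) => h; [by rewrite xE | by rewrite xB].
move=> allE.
have m0 : (m%:R : R) = 0.
  have -> : m = 0%N.
    apply/eqP; rewrite cards_eq0; apply/eqP/setP => w; rewrite !inE.
    by case: (eqVneq w v) => // /allE ->.
  by [].
rewrite epr (XAe m0) -eY /F; congr (_ / _); congr (_ * _).
rewrite eN -sq mulr_suml; congr (_ + _); apply: eq_bigr => u uv.
by rewrite xE ?allE // (XAe m0) -eY.
Qed.

Lemma dir1 (R : rcfType) n (G : rel 'I_n) (q : 'I_n -> R) :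
  undirected_graph G -> prob_distribution q -> complete_graph G ->
  alpha_insensitive_equilibrium G q.
Proof.
move=> [sym irr] qP comp a a0 a1 v Ev u [sub [hu [w Hw]]] adm.
have Gab : forall x y, G x y = (x != y).
  move=> x y; case: (eqVneq x y) => [->|xy]; [exact: negbTE | exact: comp].
case: u hu Hw adm => [u0 [u0v nG] | _] Hw adm.
  by move: nG; rewrite Gab eq_sym u0v.
have vE : v \notin Ev by apply/negP => /sub; rewrite Gab eqxx.
have wE : w \in Ev.
  move: Hw; rewrite /strategy_graph orbF eqxx /= => /andP [_].
  by case: (w \in Ev); rewrite //= orbT.
have E0 : (0 < #|Ev|)%N by apply/card_gt0P; exists w.
have wv : w != v by apply/eqP => e; move: vE; rewrite -e wE.
have DeH : forall x y, strategy_graph G v Ev None x y =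
    (x != y) && ~~ (((x == v) && (y \notin Ev)) || ((y == v) && (x \notin Ev))).
  by move=> x y; rewrite /strategy_graph orbF Gab.
have [hH _] := @star_pr R n (strategy_graph G v Ev None) v Ev q a a0 a1 qP vE E0 DeH.
have vE' : v \notin [set~ v] by rewrite !inE eqxx.
have E0' : (0 < #|[set~ v]|)%N by apply/card_gt0P; exists w; rewrite !inE.
have De : forall x y, G x y =
    (x != y) && ~~ (((x == v) && (y \notin [set~ v])) || ((y == v) && (x \notin [set~ v]))).
  move=> x y; rewrite Gab !inE !negbK.
  case: (eqVneq x y) => [->|xy] //=.
  case: (eqVneq x v) => [ex|xv] /=; case: (eqVneq y v) => [ey|yv] //=.
  by move: xy; rewrite ex ey eqxx.
have [_ hG] := @star_pr R n G v [set~ v] q a a0 a1 qP vE' E0' De.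
rewrite hG; last by move=> x xv; rewrite !inE.
by move=> lt; have := lt_le_trans lt hH; rewrite ltxx.
Qed.


Theorem theorem5p3 (R : rcfType) (n : nat) (G : rel 'I_n) (q : 'I_n -> R) :
  undirected_graph G -> connected_graph G -> prob_distribution q ->
  (alpha_insensitive_equilibrium G q <-> complete_graph G).
Proof.
move=> uG conn qP; split.
  exact: dir2.
exact: dir1.
Qed.
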